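(* Consider the Maxwell--Bloch system \[ \dot A=B,\quad \dot B=-\Omega^2A-\sigma B+cj(t),\quad i\hbar\dot C_1=\hbar\omega_1C_1+ia(t)C_2,\quad i\hbar\dot C_2=\hbar\omega_2C_2-ia(t)C_1,\qquad t>0, \] with $j(t)=2q\,\mathrm{Im}[\overline{C_1(t)}C_2(t)]$, $a(t)=\frac qc[A(t)+A_p(t)]$, where $A_p\in C[0,\infty)$ is real-valued. Then there exist constants $d_1,d_2,\gamma>0$ such that every solution with $|C_1(t)|^2+|C_2(t)|^2=1$ satisfies \[ |A(t)|^2+|B(t)|^2\le d_1\big(|A(0)|^2+|B(0)|^2\big)e^{-\gamma t}+d_2,\qquad t>0. \]
   Context: Parameters: $\Omega>0$, $\sigma>0$, $c>0$, $\hbar>0$, real $\omega_2>\omega_1$, $p>0$, $\omega=\omega_2-\omega_1$, $q=\omega p$. Unknowns: $A(t),B(t)\in\mathbb R$, $C_1(t),C_2(t)\in\mathbb C$. *)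

(* Defs.v *)
From Stdlib Require Import Reals.
From Coquelicot Require Import Coquelicot.
Open Scope R_scope.

Definition cont_nonneg (f : R -> R) : Prop :=
  forall t, 0 <= t -> filterlim f (within (fun x => 0 <= x) (locally t)) (locally (f t)).

(** (A,B,C1,C2) is a solution on t > 0 of the Maxwell--Bloch system, with
    A, B continuous up to t = 0 (so that A(0), B(0) are the initial data). *)
Definition MB_solution (Om sigma c hbar w1 w2 p : R) (Ap : R -> R)
    (A B : R -> R) (C1 C2 : R -> C) : Prop :=
  let q := (w2 - w1) * p in
  let j := fun t => 2 * q * Im (Cconj (C1 t) * C2 t) in
  let a := fun t => q / c * (A t + Ap t) in
  (forall t, 0 < t ->
     is_derive A t (B t) /\
     is_derive B t (- Om ^ 2 * A t - sigma * B t + c * j t) /\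
     (exists dC1 dC2 : C,
        is_derive C1 t dC1 /\ is_derive C2 t dC2 /\
        (Ci * RtoC hbar * dC1 = RtoC (hbar * w1) * C1 t + Ci * RtoC (a t) * C2 t)%C /\
        (Ci * RtoC hbar * dC2 = RtoC (hbar * w2) * C2 t - Ci * RtoC (a t) * C1 t)%C)) /\
  filterlim A (at_right 0) (locally (A 0)) /\
  filterlim B (at_right 0) (locally (B 0)).

(* Main.v *)
Require Import Defs.
From Stdlib Require Import Reals.
From Coquelicot Require Import Coquelicot.
From Stdlib Require Import Lra Psatz.
Open Scope R_scope.

Lemma comparison (V dV : R -> R) g K V0 t : 0 < g ->
  (forall x, 0 < x -> is_derive V x (dV x)) ->
  (forall x, 0 < x -> dV x <= - g * V x + K) ->
  filterlim V (at_right 0) (locally V0) -> 0 < t ->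
  V t <= (V0 - K / g) * exp (- g * t) + K / g.
Proof.
  intros Hg HV Hd Hl Ht.
  set (W := fun x => (V x - K / g) * exp (g * x)).
  assert (HW : forall x, 0 < x -> is_derive W x ((dV x + g * V x - K) * exp (g * x))).
  { intros x Hx. unfold W.
    apply is_derive_ext with (fun x => mult (minus (V x) (K/g)) (exp (g * x))).
    { intros; reflexivity. }
    replace ((dV x + g * V x - K) * exp (g * x)) with
      (plus (mult (minus (dV x) zero) (exp (g*x))) (mult (minus (V x) (K/g)) (scal g (exp (g*x) )))).
    2:{ unfold plus, mult, minus, scal, opp, zero; simpl. unfold mult; simpl. change (plus (dV x) (-0)) with (dV x + -0). change (plus (V x) (-(K/g))) with (V x + -(K/g)). field. lra. }
    apply (@is_derive_mult R_AbsRing (fun x => minus (V x) (K/g)) (fun x => exp (g*x))).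
    - apply (@is_derive_minus R_AbsRing (AbsRing_NormedModule R_AbsRing) V (fun _ => K/g)).
      apply HV; auto. apply (@is_derive_const R_AbsRing (AbsRing_NormedModule R_AbsRing)).
    - apply (is_derive_comp exp (fun x => g * x)). apply is_derive_exp.
      assert (H := is_derive_scal (fun x => x) x g 1 (is_derive_id x)).
      rewrite Rmult_1_r in H. exact H.
    - intros; apply Rmult_comm. }
  assert (Hmono : forall s, 0 < s <= t -> W t <= W s).
  { intros s Hs. destruct (Req_dec s t) as [->|Hne]; [lra|].
    destruct (MVT_gen W s t (fun x => (dV x + g * V x - K) * exp (g * x))) as [c [Hc Heq]].
    - intros x Hx. apply HW. rewrite Rmin_left in Hx; lra.
    - intros x Hx. rewrite Rmin_left in Hx by lra.
      apply continuity_pt_filterlim. apply (ex_derive_continuous W). eexists; apply HW; lra.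
    - rewrite Rmin_left, Rmax_right in Hc by lra.
      assert (dV c + g * V c - K <= 0) by (pose proof (Hd c ltac:(lra)); lra).
      assert (0 < exp (g*c)) by apply exp_pos.
      assert ((dV c + g * V c - K) * exp (g * c) * (t - s) <= 0).
      { apply Rmult_le_0_r. apply Rmult_le_0_r; lra. lra. }
      lra. }
  assert (HlW : filterlim W (at_right 0) (locally ((V0 - K/g) * exp (g * 0)))).
  { unfold W. apply (filterlim_comp_2 (G:=locally (V0 - K/g)) (H:=locally (exp (g*0))) (fun x => V x - K/g) (fun x => exp (g*x)) Rmult).
    - apply (filterlim_comp_2 (G:=locally V0) (H:=locally (-(K/g))) V (fun _ => -(K/g)) Rplus). exact Hl. apply filterlim_const.
      apply (filterlim_plus (V:=AbsRing_NormedModule R_AbsRing) V0 (-(K/g))).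
    - apply (filterlim_comp _ _ _ (fun x => x) (fun x => exp (g*x)) _ (locally 0)).
      + intros P [d HP]. exists d. intros y Hy _. apply HP, Hy.
      + apply (continuous_exp_comp (fun x => g * x) 0).
        apply (ex_derive_continuous (fun x => g * x)). auto_derive. auto.
    - apply (filterlim_mult (K:=R_AbsRing)). }
  assert (Hb : W t <= V0 - K/g).
  { rewrite Rmult_0_r, exp_0, Rmult_1_r in HlW.
    destruct (Rle_dec (W t) (V0 - K/g)) as [h|h]; [exact h|exfalso].
    assert (He : 0 < W t - (V0 - K/g)) by lra.
    destruct (HlW (fun y => Rabs (y - (V0 - K/g)) < W t - (V0 - K/g))) as [d Hd'].
    { exists (mkposreal _ He). intros y Hy. exact Hy. }
    set (s := Rmin (d/2) t).
    assert (0 < s) by (unfold s; apply Rmin_glb_lt; [destruct d; simpl; lra| lra]).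
    assert (s <= t) by apply Rmin_r.
    assert (s <= d/2) by apply Rmin_l.
    assert (Hs := Hd' s). 
    assert (ball 0 d s).
    { unfold ball; simpl; unfold AbsRing_ball, abs, minus, plus, opp; simpl. 
      rewrite Ropp_0, Rplus_0_r, Rabs_pos_eq by lra. destruct d; simpl in *; lra. }
    specialize (Hs H2 H).
    pose proof (Hmono s ltac:(lra)). apply Rabs_lt_between in Hs. lra. }
  assert (Hv : V t = W t * exp (- g * t) + K / g).
  { unfold W. rewrite Rmult_assoc, <- exp_plus.
    replace (g * t + - g * t) with 0 by ring. rewrite exp_0. ring. }
  rewrite Hv. pose proof (exp_pos (- g * t)).
  apply Rplus_le_compat_r. apply Rmult_le_compat_r; lra.
Qed.

Lemma lim_mult (f g : R -> R) a b :
  filterlim f (at_right 0) (locally a) -> filterlim g (at_right 0) (locally b) ->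
  filterlim (fun x => f x * g x) (at_right 0) (locally (a * b)).
Proof.
  intros Hf Hg.
  apply (filterlim_comp_2 (G:=locally a) (H:=locally b) f g Rmult); auto.
  apply (filterlim_mult (K:=R_AbsRing)).
Qed.

Lemma lim_plus (f g : R -> R) a b :
  filterlim f (at_right 0) (locally a) -> filterlim g (at_right 0) (locally b) ->
  filterlim (fun x => f x + g x) (at_right 0) (locally (a + b)).
Proof.
  intros Hf Hg.
  apply (filterlim_comp_2 (G:=locally a) (H:=locally b) f g Rplus); auto.
  apply (filterlim_plus (V:=AbsRing_NormedModule R_AbsRing)).
Qed.

Lemma lim_const (a : R) : filterlim (fun _ : R => a) (at_right 0) (locally a).
Proof. apply filterlim_const. Qed.

Lemma div_nonneg a b : 0 <= a -> 0 < b -> 0 <= a / b.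
Proof. intros. unfold Rdiv. apply Rmult_le_pos; auto. left; apply Rinv_0_lt_compat; auto. Qed.

Lemma key (s O f F A B : R) : 0 < s -> 0 < O -> f ^ 2 <= F ^ 2 ->
  let beta := O^2 + s^2/2 in
  let Bd := - O ^ 2 * A - s * B + f in
  let M := 2 + s^2 / O^2 in
  2 * B * Bd + s * (B * B + A * Bd) + 2 * beta * A * B <=
    - (s / (2 * M)) * (B * B + s * A * B + beta * A * A) + F^2 * (2/s + s/(2*O^2)).
Proof.
  intros Hs HO Hf beta Bd M.
  assert (E1 : 2 * B * Bd + s * (B * B + A * Bd) + 2 * beta * A * B
     = - s * (B^2 + O^2*A^2) + 2 * B * f + s * A * f) by (unfold Bd, beta; field).
  assert (E2 : 2 * B * f <= s/2 * B^2 + 2 * f^2 / s).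
  { assert (s/2 * B^2 + 2 * f^2 / s - 2 * B * f = (s*B - 2*f)^2/(2*s)) by (field; lra).
    assert (0 <= (s*B - 2*f)^2/(2*s)) by (apply div_nonneg; [apply pow2_ge_0 | nra]). lra. }
  assert (E3 : s * A * f <= s * O^2 / 2 * A^2 + s * f^2 / (2 * O^2)).
  { assert (s * O^2 / 2 * A^2 + s * f^2 / (2 * O^2) - s * A * f = s * (O^2*A - f)^2/(2*O^2)) by (field; lra).
    assert (0 <= s * (O^2*A - f)^2/(2*O^2)) by (apply div_nonneg; [apply Rmult_le_pos; [lra|apply pow2_ge_0] | nra]). lra. }
  assert (E4 : 2 * f^2 / s + s * f^2 / (2 * O^2) <= F^2 * (2/s + s/(2*O^2))).
  { assert (0 < 2/s + s/(2*O^2)).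
    { assert (0 < 2/s) by (apply Rdiv_lt_0_compat; lra).
      assert (0 < s/(2*O^2)) by (apply Rdiv_lt_0_compat; nra). lra. }
    replace (2 * f^2 / s + s * f^2 / (2 * O^2)) with (f^2 * (2/s + s/(2*O^2))) by (field; lra).
    apply Rmult_le_compat_r; lra. }
  assert (HM : 0 < M).
  { unfold M. assert (0 <= s^2/O^2) by (apply div_nonneg; [apply pow2_ge_0 | nra]). lra. }
  assert (E5 : B * B + s * A * B + beta * A * A <= M * (B^2 + O^2*A^2)).
  { unfold M, beta. 
    replace ((2 + s ^ 2 / O ^ 2) * (B ^ 2 + O ^ 2 * A ^ 2)) with
      (2 * B^2 + (s/O)^2 * B^2 + 2 * O^2 * A^2 + s^2 * A^2) by (field; lra).
    nra. }
  assert (E6 : - (s / (2 * M)) * (B * B + s * A * B + beta * A * A) >= - (s/2) * (B^2 + O^2*A^2)).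
  { assert (0 < s / (2*M)) by (apply Rdiv_lt_0_compat; lra).
    replace (- (s/2) * (B^2 + O^2*A^2)) with (- (s / (2*M)) * (M * (B^2 + O^2*A^2))) by (field; lra).
    nra. }
  lra.
Qed.

Lemma lower (s O A B : R) : 0 < s -> 0 < O ->
  A^2 + B^2 <= (2 + 1/O^2) * (B * B + s * A * B + (O^2 + s^2/2) * A * A).
Proof.
  intros Hs HO.
  replace ((2 + 1/O^2) * (B * B + s * A * B + (O^2 + s^2/2) * A * A)) with
    (A^2 + B^2 + (B + s*A)^2 + (B + s*A/2)^2 / O^2 + 2*O^2*A^2 + (s*A/O)^2/4) by (field; lra).
  assert (0 <= (B + s*A/2)^2 / O^2) by (apply div_nonneg; [apply pow2_ge_0 | nra]).
  pose proof (pow2_ge_0 (B + s*A)). pose proof (pow2_ge_0 (s*A/O)). pose proof (pow2_ge_0 A).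
  pose proof (pow2_ge_0 O). nra.
Qed.

Lemma upper (s O A B : R) : 0 < s -> 0 < O ->
  B * B + s * A * B + (O^2 + s^2/2) * A * A <= (2 + O^2 + s^2) * (A^2 + B^2).
Proof. intros. nra. Qed.

Theorem corollary2p2 (Om sigma c hbar w1 w2 p : R) (Ap : R -> R) :
  0 < Om -> 0 < sigma -> 0 < c -> 0 < hbar -> w1 < w2 -> 0 < p ->
  cont_nonneg Ap ->
  exists d1 d2 gamma : R, 0 < d1 /\ 0 < d2 /\ 0 < gamma /\
    forall (A B : R -> R) (C1 C2 : R -> C),
      MB_solution Om sigma c hbar w1 w2 p Ap A B C1 C2 ->
      (forall t, 0 <= t -> Cmod (C1 t) ^ 2 + Cmod (C2 t) ^ 2 = 1) ->
      forall t, 0 < t ->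
        Rabs (A t) ^ 2 + Rabs (B t) ^ 2 <=
          d1 * (Rabs (A 0) ^ 2 + Rabs (B 0) ^ 2) * exp (- gamma * t) + d2.
Proof.
  intros HO Hs Hc Hh Hw Hp _.
  assert (Hq : 0 < (w2 - w1) * p) by (apply Rmult_lt_0_compat; lra).
  pose (F := c * ((w2 - w1) * p)).
  pose (K := F^2 * (2/sigma + sigma/(2*Om^2))).
  pose (M := 2 + sigma^2 / Om^2).
  pose (g := sigma / (2 * M)).
  pose (L := 2 + 1/Om^2).
  pose (U := 2 + Om^2 + sigma^2).
  assert (HM : 0 < M).
  { unfold M. assert (0 <= sigma^2/Om^2) by (apply div_nonneg; nra). lra. }
  assert (Hg : 0 < g) by (unfold g; apply Rdiv_lt_0_compat; lra).
  assert (HL : 0 < L).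
  { unfold L. assert (0 <= 1/Om^2) by (apply div_nonneg; nra). lra. }
  assert (HU : 0 < U) by (unfold U; nra).
  assert (HF : 0 < F) by (unfold F; nra).
  assert (HK : 0 < K).
  { unfold K. apply Rmult_lt_0_compat. nra.
    assert (0 < 2/sigma) by (apply Rdiv_lt_0_compat; lra).
    assert (0 < sigma/(2*Om^2)) by (apply Rdiv_lt_0_compat; nra). lra. }
  assert (HKg : 0 < K / g) by (apply Rdiv_lt_0_compat; lra).
  exists (L * U), (L * (K / g) + 1), g.
  split; [nra|]. split; [nra|]. split; [lra|].
  intros A B C1 C2 Hsol Hn t Ht.
  unfold MB_solution in Hsol. cbv zeta in Hsol.
  destruct Hsol as [Hode [HA0 HB0]].
  pose (V := fun x => B x * B x + sigma * A x * B x + (Om^2 + sigma^2/2) * A x * A x).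
  pose (f := fun x => c * (2 * ((w2 - w1) * p) * Im (Cconj (C1 x) * C2 x))).
  pose (Bd := fun x => - Om ^ 2 * A x - sigma * B x + f x).
  pose (dV := fun x => 2 * B x * Bd x + sigma * (B x * B x + A x * Bd x) + 2 * (Om^2 + sigma^2/2) * A x * B x).
  assert (HdV : forall x, 0 < x -> is_derive V x (dV x)).
  { intros x Hx. destruct (Hode x Hx) as [HAx [HBx _]].
    unfold V. auto_derive.
    - repeat split; eexists; eauto.
      replace (Derive (fun x0 => A x0) x) with (B x) by (symmetry; apply is_derive_unique; exact HAx).
      replace (Derive (fun x0 => B x0) x) with (Bd x) by (symmetry; apply is_derive_unique; exact HBx).
      unfold dV. field. }
  assert (Hf : forall x, 0 < x -> f x ^ 2 <= F ^ 2).
  { intros x Hx. unfold f, F.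
    set (z := (Cconj (C1 x) * C2 x)%C).
    assert (Hz : Im z ^ 2 <= Cmod z ^ 2) by (rewrite Cmod2_alt; pose proof (pow2_ge_0 (Re z)); lra).
    assert (Hz2 : Cmod z = Cmod (C1 x) * Cmod (C2 x)) by (unfold z; rewrite Cmod_mult, Cmod_conj; ring).
    pose proof (Hn x ltac:(lra)) as Hnx.
    set (a := Cmod (C1 x)) in *. set (b := Cmod (C2 x)) in *.
    rewrite Hz2 in Hz.
    assert (H4 : 4 * (a * b)^2 <= 1) by (pose proof (pow2_ge_0 (a^2 - b^2)); nra).
    set (q := (w2 - w1) * p) in *.
    set (I := Im z) in *.
    assert (HI : (2 * I)^2 <= 1) by nra.
    assert (Hq2 : (2 * q * I)^2 <= q^2).
    { replace ((2*q*I)^2) with (q^2 * (2*I)^2) by ring.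
      pose proof (pow2_ge_0 q). nra. }
    replace ((c * (2 * q * I))^2) with (c^2 * (2*q*I)^2) by ring.
    replace ((c * q)^2) with (c^2 * q^2) by ring.
    pose proof (pow2_ge_0 c). nra. }
  assert (Hd : forall x, 0 < x -> dV x <= - g * V x + K).
  { intros x Hx. pose proof (key sigma Om (f x) F (A x) (B x) Hs HO (Hf x Hx)) as Hk.
    cbv zeta in Hk. unfold dV, Bd, V, g, M, K. exact Hk. }
  assert (Hl : filterlim V (at_right 0) (locally (B 0 * B 0 + sigma * A 0 * B 0 + (Om^2 + sigma^2/2) * A 0 * A 0))).
  { unfold V. apply lim_plus; [apply lim_plus|]; repeat apply lim_mult; auto using lim_const. }
  pose proof (comparison V dV g K _ t Hg HdV Hd Hl Ht) as Hcmp.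
  pose proof (lower sigma Om (A t) (B t) Hs HO) as Hlo.
  pose proof (upper sigma Om (A 0) (B 0) Hs HO) as Hup.
  fold L in Hlo. fold U in Hup. fold (V t) in Hlo.
  rewrite !pow2_abs.
  set (V0 := B 0 * B 0 + sigma * A 0 * B 0 + (Om ^ 2 + sigma ^ 2 / 2) * A 0 * A 0) in *.
  set (e := exp (- g * t)) in *.
  assert (He : 0 < e) by apply exp_pos.
  assert (H1 : L * V t <= L * ((V0 - K/g) * e + K/g)) by (apply Rmult_le_compat_l; lra).
  assert (H2 : V0 * e <= U * (A 0 ^ 2 + B 0 ^ 2) * e) by (apply Rmult_le_compat_r; lra).
  assert (H3 : 0 <= K/g * e) by nra.
  assert (H4 : L * (V0 * e) <= L * (U * (A 0 ^ 2 + B 0 ^ 2) * e)) by (apply Rmult_le_compat_l; lra).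
  assert (H5 : 0 <= L * (K/g * e)) by nra.
  nra.
Qed.
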